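(* Let $\alpha>0$ and let $m$ be an integer with $m\ge\max\{4\alpha+3,\,16\alpha^2+8\alpha+1\}$. Let $(M,g_\alpha)$ be the manifold $\mathbb{R}^m\times S^1$ with metric $g_\alpha=dr^2+f(r)^2ds_{m-1}^2+h(r)^2ds_1^2$, where $(r,u)\in[0,\infty)\times S^{m-1}$ are polar coordinates on $\mathbb{R}^m$, $ds_k^2$ is the round metric of the unit sphere $S^k$, $f(r)=r(1+r^2)^{-1/4}$ and $h(r)=(1+r^2)^{-\alpha}$. Let $N$ be the Riemannian universal cover of $(M,g_\alpha)$. Let $p\in M$ be a point with $r(p)=0$, let $\gamma$ be a generator of $\pi_1(M,p)\cong\mathbb{Z}$ (acting on $N$ by deck transformations), and let $\tilde p\in N$ be a lift of $p$. Then for all positive integers $l\ge 9^{1+\frac{1}{2\alpha}}$, $$C\cdot l^{\frac{1}{1+2\alpha}}-2\le d(\gamma^l\tilde p,\tilde p)\le 9\cdot l^{\frac{1}{1+2\alpha}},$$ where $C=2\cdot 9^{-\frac{1}{2\alpha}}$.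
   Context: $d$ denotes the Riemannian distance on $N$ with the lifted metric. *)

(* Defs.v *)
From Stdlib Require Import Reals.
From Coquelicot Require Import Coquelicot.
Open Scope R_scope.

Fixpoint sumR (n : nat) (f : nat -> R) : R :=
  match n with
  | O => 0
  | S k => sumR k f + f k
  end.

Definition dotm (m : nat) (x y : nat -> R) : R := sumR m (fun i => x i * y i).

(* The metric g_alpha = dr^2 + f(r)^2 ds_{m-1}^2 + h(r)^2 ds_1^2, lifted to the
   universal cover N = R^m x R (covering map (x,t) |-> (x, e^{it})),
   written in Cartesian coordinates x on R^m and the angle coordinate t.
   With r = |x|, the radial part of v is (x.v)/r, the tangential part has
   squared Euclidean norm |v|^2 - (x.v)^2/r^2, and the round metric of the unit
   sphere scaled by r^2 gives  f(r)^2/r^2 * (|v|^2 - (x.v)^2/r^2).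
   Here f(r)^2 = r^2 (1+r^2)^(-1/2) and h(r)^2 = (1+r^2)^(-2 alpha).
   At r = 0 the metric extends smoothly as |v|^2 + h(0)^2 w^2. *)
Definition galpha (alpha : R) (m : nat) (x : nat -> R) (v : nat -> R) (w : R) : R :=
  let r2 := dotm m x x in
  let xv := dotm m x v in
  let vv := dotm m v v in
  let h2 := Rpower (1 + r2) (- (2 * alpha)) in
  if Req_EM_T r2 0 then vv + h2 * w ^ 2
  else xv ^ 2 / r2 + (r2 / sqrt (1 + r2)) / r2 * (vv - xv ^ 2 / r2) + h2 * w ^ 2.

(* C^1 curves in N = R^m x R (coordinate functions c s i for i < m, and z s),
   parametrized by [0,1]; C^1 on all of R (any C^1 curve on [0,1] extends). *)
Definition C1 (f : R -> R) : Prop :=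
  forall s, ex_derive f s /\ continuous (Derive f) s.

Definition curve_joins (m : nat) (c : R -> nat -> R) (z : R -> R)
  (p : (nat -> R) * R) (q : (nat -> R) * R) : Prop :=
  (forall i, (i < m)%nat -> C1 (fun s => c s i)) /\ C1 z /\
  (forall i, (i < m)%nat -> c 0 i = fst p i /\ c 1 i = fst q i) /\
  z 0 = snd p /\ z 1 = snd q.

Definition curve_length (alpha : R) (m : nat) (c : R -> nat -> R) (z : R -> R) : R :=
  RInt (fun s => sqrt (galpha alpha m (c s) (fun i => Derive (fun u => c u i) s)
                                   (Derive z s))) 0 1.

Definition dist_N (alpha : R) (m : nat) (p q : (nat -> R) * R) : Rbar :=
  Glb_Rbar (fun L => exists c z, curve_joins m c z p q /\ L = curve_length alpha m c z).

Definition origin : nat -> R := fun _ => 0.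

(* Main.v *)
Require Import Defs.
From Stdlib Require Import Reals Lra Lia Psatz Classical FunctionalExtensionality.
From Coquelicot Require Import Coquelicot.
Open Scope R_scope.

Lemma sumR_ext n f g : (forall i, (i < n)%nat -> f i = g i) -> sumR n f = sumR n g.
Proof. induction n; simpl; intros H; auto. rewrite IHn by (intros; apply H; lia). rewrite H by lia. auto. Qed.

Lemma sumR_nonneg n f : (forall i, (i < n)%nat -> 0 <= f i) -> 0 <= sumR n f.
Proof. induction n; simpl; intros H; [lra|]. assert (0 <= f n) by (apply H; lia). assert (0 <= sumR n f) by (apply IHn; intros; apply H; lia). lra. Qed.

Lemma dotm_nonneg m x : 0 <= dotm m x x.
Proof. unfold dotm. apply sumR_nonneg. intros. nra. Qed.

Lemma CS m x y : (dotm m x y)^2 <= dotm m x x * dotm m y y.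
Proof.
  unfold dotm. induction m; simpl. lra.
  set (A := sumR m (fun i => x i * x i)) in *.
  set (B := sumR m (fun i => y i * y i)) in *.
  set (C := sumR m (fun i => x i * y i)) in *.
  assert (HA : 0 <= A) by (apply sumR_nonneg; intros; nra).
  assert (HB : 0 <= B) by (apply sumR_nonneg; intros; nra).
  set (a := x m) in *. set (b := y m) in *.
  assert (A * b^2 + a^2 * B - 2*a*b*C >= 0).
  { destruct (Req_dec A 0) as [H0|H0].
    - assert (C = 0). { rewrite H0 in IHm. nra. } subst C. rewrite H0. nra.
    - assert (h1: 0 <= (A*b - a*C)^2) by apply pow2_ge_0.
      assert (h2: 0 <= a^2 * (A*B - C^2)) by (apply Rmult_le_pos; nra).
      assert (A * (A * b^2 + a^2 * B - 2*a*b*C) >= 0) by nra.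
      assert (0 < A) by lra. nra. }
  nra.
Qed.

Lemma Rpower_pos x y : 0 < Rpower x y.
Proof. unfold Rpower. apply exp_pos. Qed.

Section G.
Variables (alpha : R) (m : nat) (x v : nat -> R) (w : R).
Let r2 := dotm m x x.
Let xv := dotm m x v.
Let vv := dotm m v v.
Let h2 := Rpower (1 + r2) (- (2 * alpha)).

Lemma r2_nn : 0 <= r2. Proof. apply dotm_nonneg. Qed.
Lemma vv_nn : 0 <= vv. Proof. apply dotm_nonneg. Qed.
Lemma cs' : xv^2 <= r2 * vv. Proof. apply CS. Qed.
Lemma h2_pos : 0 < h2. Proof. apply Rpower_pos. Qed.

Lemma galpha_split : galpha alpha m x v w =
  (if Req_EM_T r2 0 then vv else xv ^ 2 / r2 + (r2 / sqrt (1 + r2)) / r2 * (vv - xv ^ 2 / r2)) + h2 * w^2.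
Proof. unfold galpha. fold r2 xv vv h2. destruct (Req_EM_T r2 0); ring. Qed.

Lemma tang_nn : r2 <> 0 -> 0 <= (r2 / sqrt (1 + r2)) / r2 * (vv - xv ^ 2 / r2).
Proof.
  intros H. pose proof r2_nn. pose proof cs'. assert (0 < r2) by lra.
  assert (0 < sqrt (1 + r2)) by (apply sqrt_lt_R0; lra).
  apply Rmult_le_pos. apply Rmult_le_pos. apply Rmult_le_pos; [lra|]. left; apply Rinv_0_lt_compat; auto.
  left; apply Rinv_0_lt_compat; auto.
  assert (xv^2/r2 <= vv). { apply (Rmult_le_reg_r r2); auto. field_simplify; lra. }
  lra.
Qed.

Lemma galpha_ge_h : h2 * w^2 <= galpha alpha m x v w.
Proof.
  rewrite galpha_split. destruct (Req_EM_T r2 0).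
  - pose proof vv_nn; lra.
  - pose proof (tang_nn n). assert (0 <= xv^2/r2). { pose proof r2_nn. apply Rmult_le_pos. nra. left; apply Rinv_0_lt_compat; lra. } lra.
Qed.

Lemma galpha_nn : 0 <= galpha alpha m x v w.
Proof. pose proof galpha_ge_h. pose proof h2_pos. nra. Qed.

Lemma galpha_ge_rad eps : 0 < eps -> xv^2 / (eps + r2) <= galpha alpha m x v w.
Proof.
  intros He. pose proof r2_nn. pose proof cs'. pose proof h2_pos.
  assert (0 <= h2 * w^2) by nra.
  rewrite galpha_split. destruct (Req_EM_T r2 0) as [E|E].
  - assert (xv^2 = 0). { rewrite E in *. nra. } rewrite H3. pose proof vv_nn.
    unfold Rdiv. rewrite Rmult_0_l. lra.
  - pose proof (tang_nn E).
    assert (xv^2/(eps+r2) <= xv^2/r2).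
    { unfold Rdiv. apply Rmult_le_compat_l. nra. apply Rinv_le_contravar; lra. }
    lra.
Qed.

Lemma galpha_eq : galpha alpha m x v w =
  vv / sqrt (1 + r2) + xv^2 / (sqrt (1 + r2) * (sqrt (1 + r2) + 1)) + h2 * w^2.
Proof.
  pose proof r2_nn. pose proof cs'.
  assert (HS : 0 < sqrt (1 + r2)) by (apply sqrt_lt_R0; lra).
  assert (HS2 : sqrt (1 + r2) * sqrt (1 + r2) = 1 + r2) by (apply sqrt_sqrt; lra).
  rewrite galpha_split. destruct (Req_EM_T r2 0) as [E|E].
  - assert (xv^2 = 0). { rewrite E in *. nra. } rewrite H1. rewrite E, Rplus_0_r, sqrt_1. field.
  - set (S := sqrt (1 + r2)) in *. apply Rplus_eq_compat_r.
    assert (r2 = S*S - 1) by lra. rewrite H1. field. try (split; try lra; intro; apply E; lra).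
Qed.

Lemma galpha_radial : xv^2 = r2 * vv -> galpha alpha m x v w = vv + h2 * w^2.
Proof.
  intros E0. rewrite galpha_split. destruct (Req_EM_T r2 0) as [E|E]; auto.
  f_equal. rewrite E0. replace (r2 * vv / r2) with vv by (field; auto). ring.
Qed.
End G.

Lemma cplus (f g : R -> R) x : continuous f x -> continuous g x -> continuous (fun y => f y + g y) x.
Proof. apply (continuous_plus f g). Qed.
Lemma cmult (f g : R -> R) x : continuous f x -> continuous g x -> continuous (fun y => f y * g y) x.
Proof. apply (continuous_mult f g). Qed.
Lemma cconst (c : R) x : continuous (fun _ : R => c) x.
Proof. apply continuous_const. Qed.
Lemma csqrt (f : R -> R) x : continuous f x -> 0 <= f x -> continuous (fun y => sqrt (f y)) x.
Proof. intros. apply (@continuous_comp R_UniformSpace R_UniformSpace R_UniformSpace f sqrt); auto. apply continuity_pt_filterlim. apply continuity_pt_sqrt; auto. Qed.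
Lemma cinv (f : R -> R) x : continuous f x -> f x <> 0 -> continuous (fun y => / f y) x.
Proof. intros. apply (@continuous_comp R_UniformSpace R_UniformSpace R_UniformSpace f Rinv); auto. apply (@ex_derive_continuous R_AbsRing R_NormedModule). auto_derive. auto. Qed.
Lemma cRpower (f : R -> R) e x : continuous f x -> 0 < f x -> continuous (fun y => Rpower (f y) e) x.
Proof. intros. apply (@continuous_comp R_UniformSpace R_UniformSpace R_UniformSpace f (fun y => Rpower y e)); auto. apply (@ex_derive_continuous R_AbsRing R_NormedModule).
  unfold Rpower. auto_derive. auto. Qed.

Lemma sumR_cont n (f : nat -> R -> R) x : (forall i, (i < n)%nat -> continuous (f i) x) ->
  continuous (fun y => sumR n (fun i => f i y)) x.
Proof. induction n; simpl; intros H. apply cconst. apply cplus. apply IHn; intros; apply H; lia. apply H; lia. Qed.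

Lemma sumR_derive n (f : nat -> R -> R) df x : (forall i, (i < n)%nat -> is_derive (f i) x (df i)) ->
  is_derive (fun y => sumR n (fun i => f i y)) x (sumR n df).
Proof. induction n; simpl; intros H. apply (is_derive_const 0). 
  apply (is_derive_plus (fun y => sumR n (fun i => f i y)) (f n)). apply IHn; intros; apply H; lia. apply H; lia. Qed.

Definition vel (c : R -> nat -> R) (s : R) : nat -> R := fun i => Derive (fun u => c u i) s.
Definition integrand alpha m c z s := sqrt (galpha alpha m (c s) (vel c s) (Derive z s)).

Lemma dot_cont m (a b : R -> nat -> R) s :
  (forall i, (i < m)%nat -> continuous (fun y => a y i) s) ->
  (forall i, (i < m)%nat -> continuous (fun y => b y i) s) ->
  continuous (fun y => dotm m (a y) (b y)) s.
Proof. intros Ha Hb. unfold dotm. apply (sumR_cont m (fun i y => a y i * b y i)). intros; apply cmult; auto. Qed.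

Lemma C1_cont f s : Defs.C1 f -> continuous f s.
Proof. intros H. apply (@ex_derive_continuous R_AbsRing R_NormedModule). apply H. Qed.
Lemma C1_dcont f s : Defs.C1 f -> continuous (Derive f) s.
Proof. intros H. apply H. Qed.

Lemma integrand_cont alpha m c z s :
  (forall i, (i < m)%nat -> Defs.C1 (fun u => c u i)) -> Defs.C1 z -> continuous (integrand alpha m c z) s.
Proof.
  intros Hc Hz.
  assert (Hx : forall i, (i < m)%nat -> continuous (fun y => c y i) s) by (intros; apply C1_cont; auto).
  assert (Hv : forall i, (i < m)%nat -> continuous (fun y => vel c y i) s) by (intros; unfold vel; apply C1_dcont; auto).
  assert (Hw : continuous (Derive z) s) by (apply C1_dcont; auto).
  pose proof (dot_cont m c c s Hx Hx) as Hr.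
  pose proof (dot_cont m c (vel c) s Hx Hv) as Hxv.
  pose proof (dot_cont m (vel c) (vel c) s Hv Hv) as Hvv.
  pose proof (dotm_nonneg m (c s)) as Hr0.
  assert (HS : continuous (fun y => sqrt (1 + dotm m (c y) (c y))) s).
  { apply csqrt. apply cplus; auto. apply cconst. simpl. lra. }
  assert (HS0 : 0 < sqrt (1 + dotm m (c s) (c s))) by (apply sqrt_lt_R0; lra).
  apply continuous_ext with (f := fun y => sqrt (
     dotm m (vel c y) (vel c y) * / sqrt (1 + dotm m (c y) (c y)) +
     (dotm m (c y) (vel c y) * dotm m (c y) (vel c y)) * / (sqrt (1 + dotm m (c y) (c y)) * (sqrt (1 + dotm m (c y) (c y)) + 1)) +
     Rpower (1 + dotm m (c y) (c y)) (- (2 * alpha)) * (Derive z y * Derive z y))).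
  { intros y. unfold integrand. rewrite galpha_eq. f_equal. unfold Rdiv. simpl. ring. }
  apply csqrt.
  - apply cplus. apply cplus.
    + apply cmult; auto. apply cinv; auto. lra.
    + apply cmult. apply cmult; auto. apply cinv. apply cmult; auto. apply cplus; auto. apply cconst.
      pose proof (sqrt_pos (1 + dotm m (c s) (c s))). nra.
    + apply cmult. apply cRpower. apply cplus; auto. apply cconst. lra. apply cmult; auto.
  - pose proof (galpha_nn alpha m (c s) (vel c s) (Derive z s)). rewrite galpha_eq in H.
    unfold Rdiv in H. simpl in H. replace (Derive z s * (Derive z s * 1)) with (Derive z s * Derive z s) in H by ring.
    replace (dotm m (c s) (vel c s) * (dotm m (c s) (vel c s) * 1)) with (dotm m (c s) (vel c s) * dotm m (c s) (vel c s)) in H by ring.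
    exact H.
Qed.

Lemma integrand_ex_RInt alpha m c z a b :
  (forall i, (i < m)%nat -> Defs.C1 (fun u => c u i)) -> Defs.C1 z -> ex_RInt (integrand alpha m c z) a b.
Proof. intros. apply (@ex_RInt_continuous R_CompleteNormedModule). intros. apply integrand_cont; auto. Qed.

Lemma sumR_sym2 n (x v : nat -> R) : sumR n (fun i => v i * x i + x i * v i) = 2 * sumR n (fun i => x i * v i).
Proof. induction n; simpl. ring. rewrite IHn. ring. Qed.

Lemma C1_is_derive f s : Defs.C1 f -> is_derive f s (Derive f s).
Proof. intros H. apply Derive_correct. apply H. Qed.

Lemma r2_derive m c s : (forall i, (i < m)%nat -> Defs.C1 (fun u => c u i)) ->
  is_derive (fun y => dotm m (c y) (c y)) s (2 * dotm m (c s) (vel c s)).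
Proof.
  intros Hc. unfold dotm. rewrite <- sumR_sym2.
  apply (sumR_derive m (fun i y => c y i * c y i) (fun i => vel c s i * c s i + c s i * vel c s i)).
  intros i Hi. unfold vel.
  apply (is_derive_mult (fun y => c y i) (fun y => c y i)); try apply C1_is_derive; auto.
  intros; apply Rmult_comm.
Qed.

Lemma phi_derive m c s eps : 0 < eps -> (forall i, (i < m)%nat -> Defs.C1 (fun u => c u i)) ->
  is_derive (fun y => sqrt (eps + dotm m (c y) (c y))) s
    (dotm m (c s) (vel c s) / sqrt (eps + dotm m (c s) (c s))).
Proof.
  intros He Hc. pose proof (dotm_nonneg m (c s)).
  assert (H1 : is_derive (fun y => eps + dotm m (c y) (c y)) s (0 + 2 * dotm m (c s) (vel c s))).
  { apply (is_derive_plus (fun _ => eps) (fun y => dotm m (c y) (c y))). apply (@is_derive_const R_AbsRing R_NormedModule). apply r2_derive; auto. }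
  pose proof (is_derive_sqrt _ _ _ H1) as H2. simpl in H2.
  assert (Hp : 0 < eps + dotm m (c s) (c s)) by lra.
  specialize (H2 Hp).
  assert (0 < sqrt (eps + dotm m (c s) (c s))) by (apply sqrt_lt_R0; lra).
  replace (dotm m (c s) (vel c s) / sqrt (eps + dotm m (c s) (c s))) with
    ((0 + 2 * dotm m (c s) (vel c s)) / (2 * sqrt (eps + dotm m (c s) (c s)))) by (field; lra).
  exact H2.
Qed.

Lemma phi'_cont m c s eps : 0 < eps -> (forall i, (i < m)%nat -> Defs.C1 (fun u => c u i)) ->
  continuous (fun y => dotm m (c y) (vel c y) / sqrt (eps + dotm m (c y) (c y))) s.
Proof.
  intros He Hc.
  assert (Hx : forall i, (i < m)%nat -> continuous (fun y => c y i) s) by (intros; apply C1_cont; auto).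
  assert (Hv : forall i, (i < m)%nat -> continuous (fun y => vel c y i) s) by (intros; unfold vel; apply C1_dcont; auto).
  pose proof (dotm_nonneg m (c s)).
  apply cmult. apply dot_cont; auto. apply cinv. apply csqrt. apply cplus. apply cconst. apply dot_cont; auto.
  simpl; lra. apply Rgt_not_eq, sqrt_lt_R0. simpl; lra.
Qed.

Lemma phi'_le alpha m c z s eps : 0 < eps ->
  Rabs (dotm m (c s) (vel c s) / sqrt (eps + dotm m (c s) (c s))) <= integrand alpha m c z s.
Proof.
  intros He. pose proof (dotm_nonneg m (c s)).
  assert (0 < sqrt (eps + dotm m (c s) (c s))) by (apply sqrt_lt_R0; lra).
  unfold integrand. rewrite <- sqrt_Rsqr_abs. apply sqrt_le_1_alt.
  pose proof (galpha_ge_rad alpha m (c s) (vel c s) (Derive z s) eps He).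
  unfold Rsqr. replace (dotm m (c s) (vel c s) / sqrt (eps + dotm m (c s) (c s)) *
   (dotm m (c s) (vel c s) / sqrt (eps + dotm m (c s) (c s)))) with
   (dotm m (c s) (vel c s) ^ 2 / (sqrt (eps + dotm m (c s) (c s)) * sqrt (eps + dotm m (c s) (c s)))) by (field; lra).
  rewrite sqrt_sqrt by lra. exact H1.
Qed.

Lemma sumR_zero n : sumR n (fun _ => 0) = 0.
Proof. induction n; simpl; auto. rewrite IHn; ring. Qed.

Lemma r2_zero m (x : nat -> R) : (forall i, (i < m)%nat -> x i = 0) -> dotm m x x = 0.
Proof. intros H. unfold dotm. rewrite (sumR_ext m _ (fun _ => 0)). apply sumR_zero. intros i Hi. rewrite H; auto; ring. Qed.

Lemma radial_key alpha m c z s0 eps : 0 < eps ->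
  (forall i, (i < m)%nat -> Defs.C1 (fun u => c u i)) -> Defs.C1 z ->
  (forall i, (i < m)%nat -> c 0 i = 0) -> (forall i, (i < m)%nat -> c 1 i = 0) ->
  0 <= s0 <= 1 ->
  2 * sqrt (eps + dotm m (c s0) (c s0)) - 2 * sqrt eps <= RInt (integrand alpha m c z) 0 1.
Proof.
  intros He Hc Hz H0 H1 Hs.
  set (phi := fun y => sqrt (eps + dotm m (c y) (c y))).
  set (phi' := fun y => dotm m (c y) (vel c y) / sqrt (eps + dotm m (c y) (c y))).
  assert (I1 : is_RInt phi' 0 s0 (minus (phi s0) (phi 0))).
  { apply (@is_RInt_derive R_CompleteNormedModule). intros; apply phi_derive; auto. intros; apply phi'_cont; auto. }
  assert (I2 : is_RInt (fun y => opp (phi' y)) s0 1 (minus (opp (phi 1)) (opp (phi s0)))).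
  { apply (@is_RInt_derive R_CompleteNormedModule (fun y => opp (phi y))). intros; apply (@is_derive_opp R_AbsRing R_NormedModule); apply phi_derive; auto.
    intros. apply (@continuous_opp R_UniformSpace R_AbsRing R_NormedModule phi'). apply phi'_cont; auto. }
  assert (Ep0 : phi 0 = sqrt eps). { unfold phi. rewrite r2_zero; auto. f_equal; ring. }
  assert (Ep1 : phi 1 = sqrt eps). { unfold phi. rewrite r2_zero; auto. f_equal; ring. }
  rewrite <- (RInt_Chasles _ 0 s0 1) by (apply integrand_ex_RInt; auto).
  assert (A1 : RInt phi' 0 s0 <= RInt (integrand alpha m c z) 0 s0).
  { apply RInt_le. lra. eexists; eauto. apply integrand_ex_RInt; auto.
    intros. eapply Rle_trans. apply Rle_abs. apply phi'_le; auto. }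
  assert (A2 : RInt (fun y => opp (phi' y)) s0 1 <= RInt (integrand alpha m c z) s0 1).
  { apply RInt_le. lra. eexists; eauto. apply integrand_ex_RInt; auto.
    intros. eapply Rle_trans. apply Rle_abs. unfold opp; simpl. rewrite Rabs_Ropp. apply phi'_le; auto. }
  rewrite (is_RInt_unique _ _ _ _ I1) in A1. rewrite (is_RInt_unique _ _ _ _ I2) in A2.
  unfold minus, plus, opp in *; simpl in *. rewrite Ep0 in A1. rewrite Ep1 in A2. fold (phi s0). lra.
Qed.

Lemma radial_bound alpha m c z s0 :
  (forall i, (i < m)%nat -> Defs.C1 (fun u => c u i)) -> Defs.C1 z ->
  (forall i, (i < m)%nat -> c 0 i = 0) -> (forall i, (i < m)%nat -> c 1 i = 0) ->
  0 <= s0 <= 1 ->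
  2 * sqrt (dotm m (c s0) (c s0)) <= RInt (integrand alpha m c z) 0 1.
Proof.
  intros Hc Hz H0 H1 Hs.
  set (L := RInt (integrand alpha m c z) 0 1).
  set (r := sqrt (dotm m (c s0) (c s0))).
  destruct (Rle_or_lt (2 * r) L) as [H|H]; auto. exfalso.
  set (eps := ((2 * r - L) / 4)^2).
  assert (Hd : 0 < (2 * r - L) / 4) by lra.
  assert (He : 0 < eps) by (unfold eps; nra).
  pose proof (radial_key alpha m c z s0 eps He Hc Hz H0 H1 Hs) as K. fold L in K.
  assert (sqrt eps = (2 * r - L) / 4). { unfold eps. apply sqrt_pow2. lra. }
  assert (r <= sqrt (eps + dotm m (c s0) (c s0))). { apply sqrt_le_1_alt. lra. }
  lra.
Qed.

Lemma twist_bound alpha m c z K : 0 <= K ->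
  (forall i, (i < m)%nat -> Defs.C1 (fun u => c u i)) -> Defs.C1 z ->
  (forall s, 0 < s < 1 -> K^2 <= Rpower (1 + dotm m (c s) (c s)) (- (2 * alpha))) ->
  K * Rabs (z 1 - z 0) <= RInt (integrand alpha m c z) 0 1.
Proof.
  intros HK Hc Hz Hh.
  assert (P : forall s, 0 < s < 1 -> K * Rabs (Derive z s) <= integrand alpha m c z s).
  { intros s Hs. unfold integrand.
    pose proof (galpha_ge_h alpha m (c s) (vel c s) (Derive z s)) as G.
    specialize (Hh s Hs).
    replace (K * Rabs (Derive z s)) with (sqrt ((K * Derive z s)^2)).
    2:{ rewrite <- Rsqr_pow2, sqrt_Rsqr_abs, Rabs_mult, (Rabs_pos_eq K); auto. }
    apply sqrt_le_1_alt. eapply Rle_trans; [|exact G].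
    rewrite Rpow_mult_distr. apply Rmult_le_compat_r. apply pow2_ge_0. exact Hh. }
  assert (I : is_RInt (fun y => K * Derive z y) 0 1 (minus (K * z 1) (K * z 0))).
  { apply (@is_RInt_derive R_CompleteNormedModule (fun y => K * z y)).
    intros. apply (is_derive_scal z). apply C1_is_derive; auto.
    intros. apply cmult. apply cconst. apply C1_dcont; auto. }
  assert (I' : is_RInt (fun y => - (K * Derive z y)) 0 1 (minus (- (K * z 1)) (- (K * z 0)))).
  { apply (@is_RInt_derive R_CompleteNormedModule (fun y => - (K * z y))).
    intros. apply (@is_derive_opp R_AbsRing R_NormedModule (fun y => K * z y)). apply (is_derive_scal z). apply C1_is_derive; auto.
    intros. apply (@continuous_opp R_UniformSpace R_AbsRing R_NormedModule (fun y => K * Derive z y)).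
    apply cmult. apply cconst. apply C1_dcont; auto. }
  assert (A1 : RInt (fun y => K * Derive z y) 0 1 <= RInt (integrand alpha m c z) 0 1).
  { apply RInt_le. lra. eexists; eauto. apply integrand_ex_RInt; auto.
    intros. eapply Rle_trans; [|apply P; auto]. apply Rmult_le_compat_l; auto. apply Rle_abs. }
  assert (A2 : RInt (fun y => - (K * Derive z y)) 0 1 <= RInt (integrand alpha m c z) 0 1).
  { apply RInt_le. lra. eexists; eauto. apply integrand_ex_RInt; auto.
    intros. eapply Rle_trans; [|apply P; auto]. replace (- (K * Derive z x)) with (K * - Derive z x) by ring. apply Rmult_le_compat_l; auto.
    rewrite <- Rabs_Ropp. apply Rle_abs. }
  rewrite (is_RInt_unique _ _ _ _ I) in A1. rewrite (is_RInt_unique _ _ _ _ I') in A2.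
  unfold minus, plus, opp in *; simpl in *.
  unfold Rabs. destruct (Rcase_abs (z 1 - z 0)); nra.
Qed.

Lemma Rpower_le_neg x y e : 0 < x -> x <= y -> e <= 0 -> Rpower y e <= Rpower x e.
Proof.
  intros Hx Hxy He. unfold Rpower.
  assert (ln x <= ln y) by (apply ln_le; auto).
  assert (e * ln y <= e * ln x) by nra.
  destruct (Req_dec (e * ln y) (e * ln x)) as [E|E]. rewrite E; lra.
  left. apply exp_increasing. lra.
Qed.

Lemma Rpower_sq x e : 0 < x -> (Rpower x e)^2 = Rpower x (2 * e).
Proof. intros. replace (2 * e) with (e + e) by ring. rewrite Rpower_plus. ring. Qed.

Lemma lower_curve alpha m c z Z0 Z1 A : 0 < alpha -> 0 <= A ->
  curve_joins m c z (origin, Z0) (origin, Z1) ->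
  Rmin (2 * A) (Rpower (1 + A^2) (- alpha) * Rabs (Z1 - Z0)) <= curve_length alpha m c z.
Proof.
  intros Ha HA [Hc [Hz [He [Hz0 Hz1]]]]. simpl in *.
  assert (H0 : forall i, (i < m)%nat -> c 0 i = 0) by (intros; apply He; auto).
  assert (H1 : forall i, (i < m)%nat -> c 1 i = 0) by (intros; apply He; auto).
  change (curve_length alpha m c z) with (RInt (integrand alpha m c z) 0 1).
  destruct (classic (exists s, 0 <= s <= 1 /\ A^2 <= dotm m (c s) (c s))) as [[s [Hs HA2]]|Hn].
  - eapply Rle_trans. apply Rmin_l.
    eapply Rle_trans; [|apply (radial_bound alpha m c z s); auto].
    assert (A <= sqrt (dotm m (c s) (c s))).
    { rewrite <- (sqrt_pow2 A) by auto. apply sqrt_le_1_alt. auto. }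
    lra.
  - eapply Rle_trans. apply Rmin_r. rewrite <- Hz0, <- Hz1.
    apply twist_bound; auto. left; apply Rpower_pos.
    intros s Hs. rewrite Rpower_sq by (pose proof (pow2_ge_0 A); lra).
    replace (2 * - alpha) with (- (2 * alpha)) by ring.
    apply Rpower_le_neg. pose proof (dotm_nonneg m (c s)); lra. 2: lra.
    assert (dotm m (c s) (c s) < A^2). { apply Rnot_le_lt. intro. apply Hn. exists s. split; auto. lra. }
    lra.
Qed.

Lemma a_ge_1 alpha L : 0 < alpha -> L >= Rpower 9 (1 + 1 / (2 * alpha)) ->
  1 <= Rpower 9 (- (1 / (2 * alpha))) * Rpower L (1 / (1 + 2 * alpha)).
Proof.
  intros Ha HL.
  assert (P9 : 0 < Rpower 9 (1 + 1 / (2 * alpha))) by apply Rpower_pos.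
  assert (Rpower (Rpower 9 (1 + 1 / (2 * alpha))) (1 / (1 + 2 * alpha)) <= Rpower L (1 / (1 + 2 * alpha))).
  { apply Rle_Rpower_l. left. apply Rdiv_lt_0_compat; lra. lra. }
  rewrite Rpower_mult in H.
  replace ((1 + 1 / (2 * alpha)) * (1 / (1 + 2 * alpha))) with (1 / (2 * alpha)) in H by (field; lra).
  assert (Rpower 9 (- (1 / (2 * alpha))) * Rpower 9 (1 / (2 * alpha)) = 1).
  { rewrite <- Rpower_plus. replace (- (1 / (2 * alpha)) + 1 / (2 * alpha)) with 0 by ring. apply Rpower_O; lra. }
  pose proof (Rpower_pos 9 (- (1 / (2 * alpha)))). nra.
Qed.

Lemma main_lower alpha m l t0 sigma : 0 < alpha -> (sigma = 1 \/ sigma = -1) -> (0 < l)%nat ->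
  INR l >= Rpower 9 (1 + 1 / (2 * alpha)) ->
  Rbar_le (Finite (2 * Rpower 9 (- (1 / (2 * alpha))) * Rpower (INR l) (1 / (1 + 2 * alpha)) - 2))
    (dist_N alpha m (origin, t0 + sigma * 2 * PI * INR l) (origin, t0)).
Proof.
  intros Ha Hs Hl HL.
  assert (Hl0 : 0 < INR l) by (apply lt_0_INR; auto).
  set (beta := 1 / (1 + 2 * alpha)).
  set (A9 := Rpower 9 (- (1 / (2 * alpha)))).
  set (Lb := Rpower (INR l) beta).
  set (a := A9 * Lb).
  assert (Ha1 : 1 <= a) by (apply a_ge_1; auto).
  unfold dist_N. apply Glb_Rbar_correct. intros x [c [z [Hj ->]]]. simpl.
  eapply Rle_trans; [|apply (lower_curve alpha m c z (t0 + sigma * 2 * PI * INR l) t0 (a - 1)); auto; lra].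
  apply Rmin_glb. unfold a; lra.
  assert (HA9 : 0 < A9) by apply Rpower_pos.
  assert (HLb : 0 < Lb) by apply Rpower_pos.
  assert (E1 : Rpower (1 + (a - 1)^2) (- alpha) >= Rpower (a * a) (- alpha)).
  { apply Rle_ge, Rpower_le_neg; nra. }
  assert (E1' : Rpower (a * a) (- alpha) = Rpower A9 (- alpha) * Rpower Lb (- alpha) * (Rpower A9 (- alpha) * Rpower Lb (- alpha))).
  { rewrite (Rpower_mult_distr A9 Lb) by lra. fold a. rewrite Rpower_mult_distr by lra. reflexivity. }
  rewrite E1' in E1.
  assert (E2 : Rpower A9 (- alpha) * Rpower A9 (- alpha) = 9).
  { rewrite <- Rpower_plus. unfold A9. rewrite Rpower_mult.
    replace (- (1 / (2 * alpha)) * (- alpha + - alpha)) with 1 by (field; lra). apply Rpower_1; lra. }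
  assert (E3 : Rpower Lb (- alpha) * Rpower Lb (- alpha) * INR l = Lb).
  { rewrite <- Rpower_plus. unfold Lb. rewrite Rpower_mult.
    transitivity (Rpower (INR l) (beta * (- alpha + - alpha)) * Rpower (INR l) 1).
    f_equal. symmetry; apply Rpower_1; lra.
    rewrite <- Rpower_plus. f_equal. unfold beta. field. lra. }
  assert (E4 : Rabs (t0 - (t0 + sigma * 2 * PI * INR l)) = 2 * PI * INR l).
  { pose proof PI_RGT_0. destruct Hs; subst; [rewrite Rabs_left | rewrite Rabs_right]; nra. }
  rewrite E4.
  assert (A9le : A9 <= 1). { unfold A9. apply Rle_trans with (Rpower 9 0). apply Rle_Rpower. lra.
    assert (0 < 1 / (2 * alpha)) by (apply Rdiv_lt_0_compat; lra). lra. rewrite Rpower_O; lra. }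
  pose proof PI2_3_2.
  assert (Rpower (1 + (a - 1) ^ 2) (- alpha) * (2 * PI * INR l) >= 9 * 2 * PI * Lb).
  { rewrite <- E3.
    replace (Rpower A9 (- alpha) * Rpower Lb (- alpha) * (Rpower A9 (- alpha) * Rpower Lb (- alpha)))
      with (Rpower A9 (- alpha) * Rpower A9 (- alpha) * (Rpower Lb (- alpha) * Rpower Lb (- alpha))) in E1 by ring.
    rewrite E2 in E1. apply Rle_ge.
    replace (9 * 2 * PI * (Rpower Lb (- alpha) * Rpower Lb (- alpha) * INR l)) with
      ((9 * (Rpower Lb (- alpha) * Rpower Lb (- alpha))) * (2 * PI * INR l)) by ring.
    apply Rmult_le_compat_r. pose proof PI_RGT_0. nra. lra. }
  assert (A9 * Lb <= Lb) by (apply Rmult_le_compat_r with (r := Lb) in A9le; lra).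
  replace (2 * A9 * Lb) with (2 * a) by (unfold a; ring). fold a in H1. assert (9 * 2 * PI * Lb >= 2 * Lb) by nra. lra.
Qed.

Definition rho (s : R) := 4 * s * (1 - s).
Definition wf (s : R) := ((rho s - 10/11) + Rabs (rho s - 10/11)) / 2.
Definition cc (R0 : R) (s : R) (i : nat) := if Nat.eqb i 0 then R0 * rho s else 0.

Lemma wf_cont s : continuous wf s.
Proof.
  unfold wf, Rdiv. apply cmult; [|apply cconst]. apply cplus.
  - unfold rho. apply (@ex_derive_continuous R_AbsRing R_NormedModule). auto_derive. auto.
  - apply continuous_Rabs_comp. apply (@ex_derive_continuous R_AbsRing R_NormedModule). unfold rho. auto_derive. auto.
Qed.

Lemma wf_ex a b : ex_RInt wf a b.
Proof. apply (@ex_RInt_continuous R_CompleteNormedModule). intros; apply wf_cont. Qed.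

Lemma wf_nn s : 0 <= wf s.
Proof. unfold wf. pose proof (Rle_abs (- (rho s - 10/11))). rewrite Rabs_Ropp in H. lra. Qed.

Lemma wf_pos_rho s : 0 < wf s -> rho s > 10/11.
Proof. unfold wf. unfold Rabs. destruct (Rcase_abs (rho s - 10/11)); lra. Qed.

Lemma IW_derive s : is_derive (fun y => RInt wf 0 y) s (wf s).
Proof.
  apply (@is_derive_RInt R_CompleteNormedModule wf (fun y => RInt wf 0 y) 0). apply filter_forall. intros. apply RInt_correct. apply wf_ex.
  apply wf_cont.
Qed.

Lemma W_pos : 0 < RInt wf 0 1.
Proof.
  rewrite <- (RInt_Chasles wf 0 (2/5) 1) by apply wf_ex.
  rewrite <- (RInt_Chasles wf (2/5) (3/5) 1) by apply wf_ex.
  assert (0 <= RInt wf 0 (2/5)) by (apply RInt_ge_0; [lra| apply wf_ex| intros; apply wf_nn]).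
  assert (0 <= RInt wf (3/5) 1) by (apply RInt_ge_0; [lra| apply wf_ex| intros; apply wf_nn]).
  assert (RInt (fun _ => 1/20) (2/5) (3/5) <= RInt wf (2/5) (3/5)).
  { apply RInt_le. lra. apply ex_RInt_const. apply wf_ex. intros x Hx. unfold wf, rho.
    pose proof (Rle_abs (4 * x * (1 - x) - 10 / 11)). nra. }
  rewrite RInt_const in H1. unfold scal in H1; simpl in H1. unfold mult in H1; simpl in H1.
  unfold plus; simpl. lra.
Qed.

Definition zz (Z0 Z1 : R) (s : R) := Z0 + (Z1 - Z0) * (RInt wf 0 s / RInt wf 0 1).

Lemma zz_derive Z0 Z1 s : is_derive (zz Z0 Z1) s ((Z1 - Z0) / RInt wf 0 1 * wf s).
Proof.
  unfold zz. pose proof W_pos.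
  apply (is_derive_ext (fun y => Z0 + ((Z1 - Z0) / RInt wf 0 1) * RInt wf 0 y)).
  intros t; unfold Rdiv; rewrite Rmult_assoc, (Rmult_comm (/ RInt wf 0 1)); reflexivity.
  replace ((Z1 - Z0) / RInt wf 0 1 * wf s) with (0 + (Z1 - Z0) / RInt wf 0 1 * wf s) by ring.
  apply (is_derive_plus (fun _ => Z0) (fun y => (Z1 - Z0) / RInt wf 0 1 * RInt wf 0 y)).
  apply (@is_derive_const R_AbsRing R_NormedModule).
  apply (is_derive_scal (fun y => RInt wf 0 y)). apply IW_derive.
Qed.

Lemma zz_C1 Z0 Z1 : Defs.C1 (zz Z0 Z1).
Proof.
  intros s. split. eexists; apply zz_derive.
  apply continuous_ext with (f := fun y => (Z1 - Z0) / RInt wf 0 1 * wf y).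
  intros; symmetry; apply is_derive_unique, zz_derive.
  apply cmult. apply cconst. apply wf_cont.
Qed.

Lemma rho_derive R0 s : is_derive (fun u => R0 * rho u) s (R0 * (4 - 8 * s)).
Proof. unfold rho. auto_derive. auto. ring. Qed.

Lemma cc_C1 R0 i : Defs.C1 (fun u => cc R0 u i).
Proof.
  unfold cc. destruct (Nat.eqb i 0).
  - intros s. split. eexists; apply rho_derive.
    apply continuous_ext with (f := fun y => R0 * (4 - 8 * y)).
    intros; symmetry; apply is_derive_unique, rho_derive.
    apply (@ex_derive_continuous R_AbsRing R_NormedModule). auto_derive. auto.
  - intros s. split. eexists; apply (@is_derive_const R_AbsRing R_NormedModule).
    apply continuous_ext with (f := fun _ => 0). intros; symmetry; apply Derive_const. apply cconst.
Qed.

Lemma vel_cc R0 s : vel (cc R0) s = fun i => if Nat.eqb i 0 then R0 * (4 - 8 * s) else 0.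
Proof.
  apply functional_extensionality. intros i. unfold vel, cc. destruct (Nat.eqb i 0).
  apply is_derive_unique, rho_derive. apply Derive_const.
Qed.

Lemma dot_e0 m a b : (0 < m)%nat ->
  dotm m (fun i => if Nat.eqb i 0 then a else 0) (fun i => if Nat.eqb i 0 then b else 0) = a * b.
Proof.
  unfold dotm. induction m as [|n IH]; intros Hm. lia.
  simpl. destruct n. simpl. ring.
  rewrite IH by lia. simpl. ring.
Qed.

Lemma joins m R0 Z0 Z1 : curve_joins m (cc R0) (zz Z0 Z1) (origin, Z0) (origin, Z1).
Proof.
  pose proof W_pos.
  split. intros; apply cc_C1. split. apply zz_C1. split.
  - intros i Hi. unfold cc, origin, rho; simpl. destruct (Nat.eqb i 0); split; ring.
  - unfold zz; simpl. rewrite RInt_point. unfold zero; simpl. split. unfold Rdiv; ring. field. lra.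
Qed.

Lemma sqrt_plus_le x y : 0 <= x -> 0 <= y -> sqrt (x + y) <= sqrt x + sqrt y.
Proof.
  intros. pose proof (sqrt_pos x). pose proof (sqrt_pos y).
  rewrite <- (sqrt_pow2 (sqrt x + sqrt y)) by lra. apply sqrt_le_1_alt.
  assert (sqrt x * sqrt x = x) by (apply sqrt_sqrt; auto).
  assert (sqrt y * sqrt y = y) by (apply sqrt_sqrt; auto). nra.
Qed.

Lemma integrand_cc alpha m R0 Z0 Z1 s : (0 < m)%nat ->
  integrand alpha m (cc R0) (zz Z0 Z1) s =
  sqrt ((R0 * (4 - 8 * s))^2 + Rpower (1 + (R0 * rho s) * (R0 * rho s)) (- (2 * alpha)) *
        ((Z1 - Z0) / RInt wf 0 1 * wf s)^2).
Proof.
  intros Hm. unfold integrand. rewrite vel_cc. rewrite (is_derive_unique _ _ _ (zz_derive Z0 Z1 s)).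
  rewrite galpha_radial; unfold cc; rewrite !dot_e0 by auto. f_equal. f_equal. ring. ring.
Qed.

Lemma pointwise_up alpha m Lb Z0 Z1 s : (0 < m)%nat -> 0 < alpha -> 0 < Lb ->
  integrand alpha m (cc (11/10 * Lb)) (zz Z0 Z1) s <=
  11/10 * Lb * Rabs (4 - 8 * s) + Rpower Lb (- (2 * alpha)) * Rabs ((Z1 - Z0) / RInt wf 0 1) * wf s.
Proof.
  intros Hm Ha HL. rewrite integrand_cc by auto.
  set (R0 := 11/10 * Lb). set (k := (Z1 - Z0) / RInt wf 0 1).
  set (h := Rpower (1 + R0 * rho s * (R0 * rho s)) (- (2 * alpha))).
  assert (Hh : 0 < h) by apply Rpower_pos.
  eapply Rle_trans. apply sqrt_plus_le. apply pow2_ge_0. pose proof (pow2_ge_0 (k * wf s)). nra.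
  apply Rplus_le_compat.
  - rewrite <- Rsqr_pow2, sqrt_Rsqr_abs, Rabs_mult, (Rabs_pos_eq R0) by (unfold R0; lra). lra.
  - rewrite sqrt_mult_alt by lra. rewrite <- Rsqr_pow2, sqrt_Rsqr_abs, Rabs_mult, (Rabs_pos_eq (wf s)) by apply wf_nn.
    pose proof (wf_nn s). destruct H as [Hw|Hw].
    2:{ rewrite <- Hw. lra. }
    pose proof (wf_pos_rho s Hw).
    assert (sqrt h <= Rpower Lb (- (2 * alpha))).
    { rewrite <- (sqrt_pow2 (Rpower Lb (- (2 * alpha)))) by (left; apply Rpower_pos).
      apply sqrt_le_1_alt. unfold h. simpl. rewrite Rmult_1_r. rewrite Rpower_mult_distr by lra.
      apply Rpower_le_neg. apply Rmult_lt_0_compat; lra. 2: lra. unfold R0. clear k h Hh. assert (11/10 * Lb * rho s > Lb) by nra. nra. }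
    pose proof (Rabs_pos k). pose proof (sqrt_pos h).
    assert (sqrt h * Rabs k <= Rpower Lb (- (2 * alpha)) * Rabs k) by (apply Rmult_le_compat_r; auto).
    nra.
Qed.

Lemma int_abs : RInt (fun s => Rabs (4 - 8 * s)) 0 1 = 2.
Proof.
  assert (I1 : is_RInt (fun s => Rabs (4 - 8 * s)) 0 (1/2) (minus ((fun s => 4 * s - 4 * s * s) (1/2)) ((fun s => 4 * s - 4 * s * s) 0))).
  { apply (@is_RInt_ext R_NormedModule (fun s => 4 - 8 * s)).
    intros x Hx. rewrite Rmin_left in Hx by lra. rewrite Rmax_right in Hx by lra. rewrite Rabs_right; lra.
    apply (@is_RInt_derive R_CompleteNormedModule (fun s => 4 * s - 4 * s * s)). intros; auto_derive; auto; ring.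
    intros. apply (@ex_derive_continuous R_AbsRing R_NormedModule). auto_derive. auto. }
  assert (I2 : is_RInt (fun s => Rabs (4 - 8 * s)) (1/2) 1 (minus ((fun s => 4 * s * s - 4 * s) 1) ((fun s => 4 * s * s - 4 * s) (1/2)))).
  { apply (@is_RInt_ext R_NormedModule (fun s => 8 * s - 4)).
    intros x Hx. rewrite Rmin_left in Hx by lra. rewrite Rmax_right in Hx by lra. rewrite Rabs_left; lra.
    apply (@is_RInt_derive R_CompleteNormedModule (fun s => 4 * s * s - 4 * s)). intros; auto_derive; auto; ring.
    intros. apply (@ex_derive_continuous R_AbsRing R_NormedModule). auto_derive. auto. }
  pose proof (is_RInt_Chasles _ _ _ _ _ _ I1 I2) as I.
  rewrite (is_RInt_unique _ _ _ _ I). unfold minus, plus, opp; simpl. field.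
Qed.

Lemma length_up alpha m Lb Z0 Z1 : (0 < m)%nat -> 0 < alpha -> 0 < Lb ->
  curve_length alpha m (cc (11/10 * Lb)) (zz Z0 Z1) <= 2 * (11/10 * Lb) + Rpower Lb (- (2 * alpha)) * Rabs (Z1 - Z0).
Proof.
  intros Hm Ha HL. pose proof W_pos as HW.
  change (curve_length alpha m (cc (11/10 * Lb)) (zz Z0 Z1)) with (RInt (integrand alpha m (cc (11/10 * Lb)) (zz Z0 Z1)) 0 1).
  set (C := Rpower Lb (- (2 * alpha)) * Rabs ((Z1 - Z0) / RInt wf 0 1)).
  assert (Ia : is_RInt (fun s => Rabs (4 - 8 * s)) 0 1 2).
  { rewrite <- int_abs. apply (@RInt_correct R_CompleteNormedModule). apply (@ex_RInt_continuous R_CompleteNormedModule). intros.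
    apply continuous_Rabs_comp. apply (@ex_derive_continuous R_AbsRing R_NormedModule). auto_derive. auto. }
  assert (Iw : is_RInt wf 0 1 (RInt wf 0 1)) by (apply (@RInt_correct R_CompleteNormedModule), wf_ex).
  pose proof (is_RInt_plus _ _ _ _ _ _ (is_RInt_scal _ _ _ (11/10 * Lb) _ Ia) (is_RInt_scal _ _ _ C _ Iw)) as I.
  assert (E : RInt (fun y => 11/10 * Lb * Rabs (4 - 8 * y) + C * wf y) 0 1 = 11/10 * Lb * 2 + C * RInt wf 0 1).
  { apply (@is_RInt_unique R_CompleteNormedModule). exact I. }
  eapply Rle_trans. apply (RInt_le _ (fun y => 11/10 * Lb * Rabs (4 - 8 * y) + C * wf y)).
  lra. apply integrand_ex_RInt. intros; apply cc_C1. apply zz_C1.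
  eexists; exact I. intros x _. apply pointwise_up; auto.
  rewrite E.
  unfold C. unfold Rdiv. rewrite Rabs_mult, Rabs_Rinv by lra. rewrite (Rabs_pos_eq (RInt wf 0 1)) by lra.
  right. field. lra.
Qed.

Lemma PI_ub : PI <= 334/100.
Proof.
  destruct (PI_ineq 2) as [_ H]. simpl in H. unfold tg_alt, PI_tg in H. simpl in H.
  replace (INR 1) with 1 in H by (simpl; ring).
  repeat match type of H with context [INR (S ?n)] => rewrite (S_INR n) in H end. simpl in H.
  lra.
Qed.

Lemma main_upper alpha m l t0 sigma : 0 < alpha -> INR m >= 4 * alpha + 3 ->
  (sigma = 1 \/ sigma = -1) -> (0 < l)%nat ->
  Rbar_le (dist_N alpha m (origin, t0 + sigma * 2 * PI * INR l) (origin, t0))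
    (Finite (9 * Rpower (INR l) (1 / (1 + 2 * alpha)))).
Proof.
  intros Ha Hm Hs Hl.
  assert (Hm0 : (0 < m)%nat). { destruct m. simpl in Hm. lra. lia. }
  assert (Hl0 : 0 < INR l) by (apply lt_0_INR; auto).
  set (beta := 1 / (1 + 2 * alpha)).
  set (Lb := Rpower (INR l) beta).
  assert (HLb : 0 < Lb) by apply Rpower_pos.
  set (Z0 := t0 + sigma * 2 * PI * INR l).
  apply Rbar_le_trans with (Finite (curve_length alpha m (cc (11/10 * Lb)) (zz Z0 t0))).
  { unfold dist_N. apply Glb_Rbar_correct. exists (cc (11/10 * Lb)), (zz Z0 t0). split; auto. apply joins. }
  simpl. eapply Rle_trans. apply length_up; auto.
  assert (E4 : Rabs (t0 - Z0) = 2 * PI * INR l).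
  { unfold Z0. pose proof PI_RGT_0. destruct Hs; subst; [rewrite Rabs_left | rewrite Rabs_right]; nra. }
  rewrite E4.
  assert (E3 : Rpower Lb (- (2 * alpha)) * INR l = Lb).
  { unfold Lb. rewrite Rpower_mult.
    transitivity (Rpower (INR l) (beta * - (2 * alpha)) * Rpower (INR l) 1).
    f_equal. symmetry; apply Rpower_1; lra.
    rewrite <- Rpower_plus. f_equal. unfold beta. field. lra. }
  pose proof PI_ub.
  replace (Rpower Lb (- (2 * alpha)) * (2 * PI * INR l)) with (2 * PI * (Rpower Lb (- (2 * alpha)) * INR l)) by ring.
  rewrite E3. fold Lb. nra.
Qed.

Theorem lemma1p1 (alpha : R) (m l : nat) (t0 sigma : R) :
  0 < alpha ->
  INR m >= 4 * alpha + 3 ->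
  INR m >= 16 * alpha ^ 2 + 8 * alpha + 1 ->
  (sigma = 1 \/ sigma = -1) ->
  (0 < l)%nat ->
  INR l >= Rpower 9 (1 + 1 / (2 * alpha)) ->
  let d := dist_N alpha m (origin, t0 + sigma * 2 * PI * INR l) (origin, t0) in
  let C := 2 * Rpower 9 (- (1 / (2 * alpha))) in
  Rbar_le (Finite (C * Rpower (INR l) (1 / (1 + 2 * alpha)) - 2)) d /\
  Rbar_le d (Finite (9 * Rpower (INR l) (1 / (1 + 2 * alpha)))).
Proof.
  intros Ha Hm Hm2 Hs Hl HL d C. split.
  - unfold d, C. apply main_lower; auto.
  - unfold d. apply main_upper; auto.
Qed.
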